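(* Let $T'=(m_1,\dots,m_p)$ be a pseudo type vector, let $\mathbb X\subset\mathbb P^2$ be the standard pseudo linear configuration of type $T'$, and let $\Delta T'=(m_1,m_2-m_1,\dots,m_p-m_{p-1})$. Then: (i) $\mathbb X$ can be obtained from the empty scheme by a finite sequence of basic double links; (ii) the first difference of the Hilbert function of $\mathbb X$ is the standard O-sequence associated to $T'$; (iii) assume that between any two zero entries of $\Delta T'$ there is at least one entry $>1$. If $\Delta T'$ ends with a $0$, or ends with a $0$ followed by some number of $1$'s, then the regularity of $\mathbb X$ is $m_p+1$; otherwise the regularity is $m_p$; (iv) if $\Delta T'$ has two zero entries between which there is no entry $>1$, then the regularity of $\mathbb X$ may be arbitrarily larger than $m_p$ (i.e. for every $N$ there are such pseudo type vectors whose standard pseudo linear configuration has regularity $\ge m_p+N$).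
   Context: Work over an infinite field $k$ of characteristic zero, $R=k[x_0,x_1,x_2]$, $\mathbb P^2=\operatorname{Proj}R$. A pseudo type vector is a sequence $(m_1,\dots,m_p)$ of positive integers with $m_1\le\cdots\le m_p$ such that whenever $m_{i-1}=m_i$ we have $m_i<m_{i+1}$. The standard pseudo linear configuration of type $(m_1,\dots,m_p)$ consists, for each $i=1,\dots,p$, of the $m_i$ points $[j:p-i:1]$, $0\le j\le m_i-1$. For a zero-dimensional scheme $\mathbb Y$ with saturated ideal $I_{\mathbb Y}$, $h_{\mathbb Y}(t)=\dim_k(R/I_{\mathbb Y})_t$, $\Delta h(t)=h(t)-h(t-1)$ (with $h(t)=0$ for $t<0$), and the regularity of $\mathbb Y$ is the least $t$ with $\Delta h_{\mathbb Y}(t)=0$ (equivalently $\min\{t:h^1(\mathcal I_{\mathbb Y}(t-1))=0\}$). Standard O-sequence: set $m_0=0$, $m_{p+1}=\infty$. For each $i$: if $m_{i-1}<m_i<m_{i+1}$, let $s_i$ be the sequence with $(s_i)_t=1$ for $0\le t\le m_i-1$ and $0$ otherwise; if $m_{i-1}=m_i<m_{i+1}$, let $(s_i)_0=1$, $(s_i)_t=2$ for $1\le t\le m_i-1$, $(s_i)_{m_i}=1$, and $0$ otherwise; if $m_{i-1}<m_i=m_{i+1}$, $s_i$ is not defined. For a sequence $s$ and $k\ge0$, $s(-k)$ is $s$ shifted right by $k$ places ($s(-k)_t=s_{t-k}$). The standard O-sequence associated to $T'$ is $\sum_i s_i(i-p)$, the sum over those $i$ for which $s_i$ is defined (so $s_i$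 is shifted right by $p-i$). Basic double link: if $\mathbb Y$ is a zero-dimensional subscheme (or empty, with ideal $R$), $F\in I_{\mathbb Y}$ and $G$ are homogeneous forms with $F,G$ a regular sequence, then $G\cdot I_{\mathbb Y}+(F)$ is the saturated ideal of a zero-dimensional scheme, called a basic double link of $\mathbb Y$. *)

(* Defs.v *)
From HB Require Import structures.
From mathcomp Require Import all_boot all_order all_algebra.
From mathcomp Require Import mpoly.
Set Implicit Arguments.
Unset Strict Implicit.
Unset Printing Implicit Defensive.
Import Order.TTheory GRing.Theory Num.Theory.
Local Open Scope ring_scope.

(* ---------- pseudo type vectors (0-based: m_{i+1} = T`_i) ---------- *)
Definition pseudo_type_vector (T : seq nat) : Prop :=
  (0 < size T)%N /\
  (forall i, (i < size T)%N -> (0 < nth 0%N T i)%N) /\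
  (forall i, (i.+1 < size T)%N -> (nth 0%N T i <= nth 0%N T i.+1)%N) /\
  (forall i, (i.+2 < size T)%N -> nth 0%N T i = nth 0%N T i.+1 ->
       (nth 0%N T i.+1 < nth 0%N T i.+2)%N).

Definition deltaT (T : seq nat) (i : nat) : nat :=
  if i is j.+1 then (nth 0%N T j.+1 - nth 0%N T j)%N else nth 0%N T 0.

Definition point (k : fieldType) (a b c : k) : 'rV[k]_3 :=
  \row_(i < 3) nth 0 [:: a; b; c] i.

Definition std_config (k : fieldType) (T : seq nat) : seq 'rV[k]_3 :=
  flatten [seq [seq point (j%:R) ((size T - i.+1)%:R) 1 | j <- iota 0 (nth 0%N T i)]
          | i <- iota 0 (size T)].

Notation R3 k := {mpoly k[3]}.

Definition ev (k : fieldType) (P : 'rV[k]_3) (f : R3 k) : k := f.@[fun i => P 0 i].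

Definition homog_of_deg (k : fieldType) (d : nat) (f : R3 k) : bool :=
  all (fun m : 'X_{1..3} => mdeg m == d) (msupp f).

Definition hcomp (k : fieldType) (d : nat) (f : R3 k) : R3 k :=
  \sum_(m <- msupp f | mdeg m == d) f@_m *: 'X_[m].

(* saturated (= homogeneous vanishing) ideal of a reduced finite set of points *)
Definition vanishing_ideal (k : fieldType) (X : seq 'rV[k]_3) (f : R3 k) : Prop :=
  forall d P, P \in X -> ev P (hcomp d f) = 0.

Definition monoms (t : nat) := {m : 'X_{1..3 < t.+1} | mdeg m == t}.

(* h_X(t) = dim (R/I_X)_t = rank of the evaluation map R_t -> k^X,
   whose kernel is (I_X)_t *)
Definition hilb (k : fieldType) (X : seq 'rV[k]_3) (t : nat) : nat :=
  \rank (\matrix_(m < #|{: monoms t}|, j < size X)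
           ev (nth 0 X j) 'X_[val (val (enum_val m))] : 'M[k]_(_, _)).

(* first difference, with h(t) = 0 for t < 0 *)
Definition dhilb (k : fieldType) (X : seq 'rV[k]_3) (t : nat) : int :=
  if t is s.+1 then (hilb X s.+1)%:Z - (hilb X s)%:Z else (hilb X 0)%:Z.

Definition is_regularity (k : fieldType) (X : seq 'rV[k]_3) (r : nat) : Prop :=
  dhilb X r = 0 /\ forall t, (t < r)%N -> dhilb X t <> 0.

Definition s_seq (T : seq nat) (i t : nat) : nat :=
  let mi := nth 0%N T i in
  let prev := if i is j.+1 then nth 0%N T j else 0%N in
  if (i.+1 < size T)%N && (nth 0%N T i.+1 == mi) then 0%N (* s_i undefined *)
  else if prev == mi then
    (if t == 0%N then 1%N else if (t <= mi.-1)%N then 2%N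
     else if t == mi then 1%N else 0%N)
  else (if (t < mi)%N then 1%N else 0%N).

(* sum_i s_i shifted right by p - i (1-based i), i.e. size T - i.+1 (0-based) *)
Definition std_O_seq (T : seq nat) (t : nat) : nat :=
  \sum_(i < size T)
     (if (size T - i.+1 <= t)%N then s_seq T i (t - (size T - i.+1)) else 0%N).

Definition ideal_gen1 (k : fieldType) (F : R3 k) (h : R3 k) : Prop :=
  exists c, h = F * c.

Definition regular_seq2 (k : fieldType) (F G : R3 k) : Prop :=
  F != 0 /\
  (forall h, ideal_gen1 F (G * h) -> ideal_gen1 F h) /\
  ~ (exists a b, 1 = F * a + G * b).

Definition bdl_ideal (k : fieldType) (I : R3 k -> Prop) (F G : R3 k) (h : R3 k) : Prop :=
  exists a b, I a /\ h = G * a + F * b.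

Inductive bdl_obtainable (k : fieldType) : (R3 k -> Prop) -> Prop :=
| bdl_empty : bdl_obtainable (fun _ => True)
| bdl_step (I : R3 k -> Prop) (F G : R3 k) (dF dG : nat) :
    bdl_obtainable I -> I F -> homog_of_deg dF F -> homog_of_deg dG G ->
    regular_seq2 F G -> bdl_obtainable (bdl_ideal I F G).

(* Main.v *)
Require Import Defs.
From HB Require Import structures.
From mathcomp Require Import all_boot all_order all_algebra.
From mathcomp Require Import mpoly.
From mathcomp Require Import zify ring.
Set Implicit Arguments.
Unset Strict Implicit.
Unset Printing Implicit Defensive.
Import Order.TTheory GRing.Theory Num.Theory.
Local Open Scope ring_scope.
Print has_char0.
Section S.
Variable k : fieldType.
Hypothesis ch : [pchar k] =i pred0.

Lemma natr_inj (a b : nat) : (a%:R == b%:R :> k) = (a == b).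
Proof.
have H := (pcharf0P k).1 ch.
apply/eqP/eqP => [|->//].
wlog le: a b / (a <= b)%N => [W|].
  case: (leqP a b) => [/W//|/ltnW/W W' E]; by rewrite W'.
move=> E; have: ((b - a)%:R == 0 :> k) by rewrite natrB // E subrr.
by rewrite H subn_eq0 => ba; apply/eqP; rewrite eqn_leq le ba.
Qed.

Lemma poly_inf_roots (q : {poly k}) :
  (forall x : k, x != 0 -> q.[x] = 0) -> q = 0.
Proof.
move=> H; apply/eqP; apply/negPn/negP => nz.
set rs := [seq (i.+1)%:R | i <- iota 0 (size q)] : seq k.
have H1 : all (root q) rs.
  apply/allP => x /mapP [i _ ->]; apply/rootP; apply: H.
  by rewrite ((pcharf0P k).1 ch).
have H2 : uniq rs.
  rewrite map_inj_uniq ?iota_uniq // => a b /eqP.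
  by rewrite natr_inj => /eqP [].
by move: (max_poly_roots nz H1 H2); rewrite size_map size_iota ltnn.
Qed.
Definition o0 : 'I_3 := @Ordinal 3 0 isT.
Definition o1 : 'I_3 := @Ordinal 3 1 isT.
Definition o2 : 'I_3 := @Ordinal 3 2 isT.

Lemma big3 (R : Type) (idx : R) (op : R -> R -> R) (F : 'I_3 -> R) :
  \big[op/idx]_(i < 3) F i = op (F o0) (op (F o1) (op (F o2) idx)).
Proof.
rewrite !big_ord_recl big_ord0; congr (op (F _) (op (F _) (op (F _) _))); exact: val_inj.
Qed.

Lemma mnm3P (m m' : 'X_{1..3}) : m o0 = m' o0 -> m o1 = m' o1 -> m o2 = m' o2 -> m = m'.
Proof.
move=> h0 h1 h2; apply/mnmP => -[[|[|[|//]]] Hi].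
- by rewrite (_ : Ordinal Hi = o0) //; exact: val_inj.
- by rewrite (_ : Ordinal Hi = o1) //; exact: val_inj.
- by rewrite (_ : Ordinal Hi = o2) //; exact: val_inj.
Qed.

Lemma mpoly3_eq0 (f : {mpoly k[3]}) : (forall v, f.@[v] = 0) -> f = 0.
Proof.
move=> Hf.
pose N := msize f.
pose e (m : 'X_{1..3}) := (m o0 + N * (m o1 + N * m o2))%N.
pose q := \sum_(m <- msupp f) f@_m *: ('X^(e m) : {poly k}).
have Hq : forall t, q.[t] = f.@[fun i => t ^+ (N ^ i)].
  move=> t; rewrite mevalE horner_sum; apply: eq_bigr => m _.
  rewrite hornerZ hornerXn; congr (_ * _).
  rewrite big3 /= -!exprM mulr1 -!exprD; congr (t ^+ _).
  idtac.
  rewrite /e; ring.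
have q0 : q = 0 by apply: poly_inf_roots => x _; rewrite Hq Hf.
have comp_lt : forall m, m \in msupp f -> forall i, (m i < N)%N.
  move=> m /msize_mdeg_lt; rewrite mdegE big3 => H i.
  have : (i < 3)%N by [].
  case: i => -[|[|[|//]]] Hi _ /=.
  - rewrite (_ : Ordinal Hi = o0); [lia| exact: val_inj].
  - rewrite (_ : Ordinal Hi = o1); [lia| exact: val_inj].
  - rewrite (_ : Ordinal Hi = o2); [lia| exact: val_inj].
have einj : forall m m', m \in msupp f -> m' \in msupp f -> e m = e m' -> m = m'.
  move=> m m' Hm Hm' E.
  have N0 : (0 < N)%N by move: (comp_lt m Hm o0); lia.
  have modE : forall x y, (x < N)%N -> ((x + N * y) %% N = x)%N.
    by move=> x y xN; rewrite addnC mulnC modnMDl modn_small.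
  have E0 : m o0 = m' o0.
    by move: (congr1 (modn^~ N) E); rewrite /e !modE ?comp_lt.
  have E' : (m o1 + N * m o2 = m' o1 + N * m' o2)%N.
    move: E; rewrite /e E0 => /eqP; rewrite eqn_add2l => /eqP E.
    by apply/eqP; rewrite -(eqn_pmul2l N0) E.
  have E1 : m o1 = m' o1.
    by move: (congr1 (modn^~ N) E'); rewrite !modE ?comp_lt.
  apply: mnm3P => //; move: E'; rewrite E1 => /eqP; rewrite eqn_add2l.
  by rewrite (eqn_pmul2l N0) => /eqP.
rewrite [f]mpolyE big1_seq // => m /andP [_ Hm].
have : q`_(e m) = 0 by rewrite q0 coef0.
rewrite coef_sum (bigD1_seq m) ?msupp_uniq //= coefZ coefXn eqxx mulr1.
rewrite big1_seq ?addr0 => [->|]; first by rewrite scale0r.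
move=> m' /andP [ne Hm']; rewrite coefZ coefXn.
case: eqP => [E|]; last by rewrite mulr0.
move: (einj _ _ Hm Hm' E) => {}E.
by move: ne; rewrite E eqxx.
Qed.

Lemma hcomp_ev (d : nat) (f : {mpoly k[3]}) (v : 'I_3 -> k) :
  (hcomp d f).@[v] = \sum_(m <- msupp f | mdeg m == d) f@_m * \prod_i v i ^+ m i.
Proof.
rewrite /hcomp raddf_sum /=; apply: eq_bigr => m _.
by rewrite mevalZ mevalX.
Qed.

Lemma ev_scale_hcomp (f : {mpoly k[3]}) (v : 'I_3 -> k) (l : k) :
  f.@[fun i => l * v i] = \sum_(d < msize f) l ^+ d * (hcomp d f).@[v].
Proof.
under eq_bigr do rewrite hcomp_ev big_distrr /= big_mkcond /=.
rewrite exchange_big /= mevalE big_seq [RHS]big_seq; apply: eq_bigr => m Hm.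
rewrite -big_mkcond /=.
rewrite (big_pred1 (Ordinal (msize_mdeg_lt Hm))); last first.
  move=> d /=; rewrite eq_sym; apply/eqP/eqP => [E|->//]; exact: val_inj.
rewrite /= mulrCA; congr (_ * _).
rewrite mdegE -prodrXr -big_split /=; apply: eq_bigr => i _.
by rewrite exprMn.
Qed.

Lemma vanishP (X : seq 'rV[k]_3) (f : {mpoly k[3]}) :
  vanishing_ideal X f <->
  (forall P, P \in X -> forall l, l != 0 -> f.@[fun i => l * P 0 i] = 0).
Proof.
split.
  move=> H P HP l _; rewrite ev_scale_hcomp big1 // => d _.
  by move: (H d P HP); rewrite /ev => ->; rewrite mulr0.
move=> H d P HP; rewrite /ev.
case: (ltnP d (msize f)) => [dN|Nd]; last first.
  rewrite hcomp_ev big1_seq // => m /andP [/eqP Ed Hm].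
  by move: (msize_mdeg_lt Hm); rewrite Ed ltnNge Nd.
pose q := \poly_(i < msize f) (hcomp i f).@[fun i => P 0 i].
have : q = 0.
  apply: poly_inf_roots => l l0.
  rewrite horner_poly -[RHS](H P HP l l0) ev_scale_hcomp.
  by apply: eq_bigr => i _; rewrite mulrC.
move=> q0; have := coef_poly (msize f) (fun i => (hcomp i f).@[fun i => P 0 i]) d.
by rewrite -/q q0 coef0 dN => <-.
Qed.

Definition subst_ev (v w : 'I_3) (c : k) (u : 'I_3 -> k) : 'I_3 -> k :=
  fun i => if i == v then c * u w else u i.

Lemma divlin (v w : 'I_3) (c : k) (f : {mpoly k[3]}) : v != w ->
  exists q g, f = ('X_v - c *: 'X_w) * q + g /\
    forall u, g.@[u] = f.@[subst_ev v w c u].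
Proof.
move=> vw.
pose L : {mpoly k[3]} := 'X_v - c *: 'X_w.
pose Pr (f : {mpoly k[3]}) := exists q g, f = L * q + g /\
    forall u, g.@[u] = f.@[subst_ev v w c u].
have PrD : forall f1 f2, Pr f1 -> Pr f2 -> Pr (f1 + f2).
  move=> f1 f2 [q1 [g1 [E1 H1]]] [q2 [g2 [E2 H2]]].
  exists (q1 + q2), (g1 + g2); split; first by rewrite E1 E2; ring.
  by move=> u; rewrite !mevalD H1 H2.
have PrM : forall f1 f2, Pr f1 -> Pr f2 -> Pr (f1 * f2).
  move=> f1 f2 [q1 [g1 [E1 H1]]] [q2 [g2 [E2 H2]]].
  exists (q1 * (L * q2 + g2) + g1 * q2), (g1 * g2); split; first by rewrite E1 E2; ring.
  by move=> u; rewrite !mevalM H1 H2.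
have PrC : forall a, Pr a%:MP.
  move=> a; exists 0, a%:MP; split; first by rewrite mulr0 add0r.
  by move=> u; rewrite !mevalC.
have PrX : forall i, Pr 'X_i.
  move=> i; case: (eqVneq i v) => [->|iv].
    exists 1, (c *: 'X_w); split; first by rewrite mulr1 /L subrK.
    by move=> u; rewrite mevalZ !mevalXU /subst_ev eqxx.
  exists 0, 'X_i; split; first by rewrite mulr0 add0r.
  by move=> u; rewrite !mevalXU /subst_ev (negbTE iv).
have PrXn : forall i n, Pr ('X_i ^+ n).
  move=> i; elim=> [|n IH]; first by rewrite expr0 -mpolyC1; apply: PrC.
  by rewrite exprS; apply: PrM.
rewrite [f]mpolyE; apply: (big_ind Pr) => //; first by rewrite -(mpolyC0); apply: PrC.
move=> m _; rewrite -mul_mpolyC; apply: (PrM) => //.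
rewrite mpolyXE_id; apply: (big_ind Pr) => //; first by rewrite -mpolyC1; apply: PrC.
Qed.

Definition vec3 (a b c : k) : 'I_3 -> k := fun i => nth 0 [:: a; b; c] i.

Lemma eq3 (u u' : 'I_3 -> k) : u o0 = u' o0 -> u o1 = u' o1 -> u o2 = u' o2 -> u =1 u'.
Proof.
move=> h0 h1 h2 -[[|[|[|//]]] Hi].
- by rewrite (_ : Ordinal Hi = o0) //; exact: val_inj.
- by rewrite (_ : Ordinal Hi = o1) //; exact: val_inj.
- by rewrite (_ : Ordinal Hi = o2) //; exact: val_inj.
Qed.

Definition Lc (c : k) : {mpoly k[3]} := 'X_o1 - c *: 'X_o2.
Definition Am (m : nat) : {mpoly k[3]} := \prod_(j < m) ('X_o0 - j%:R *: 'X_o2).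

Lemma Lc_ev c u : (Lc c).@[u] = u o1 - c * u o2.
Proof. by rewrite /Lc mevalB mevalZ !mevalXU. Qed.

Lemma Am_ev m u : (Am m).@[u] = \prod_(j < m) (u o0 - j%:R * u o2).
Proof.
rewrite /Am; elim: m => [|m IH]; first by rewrite !big_ord0 meval1.
by rewrite !big_ord_recr /= mevalM IH mevalB mevalZ !mevalXU.
Qed.

Lemma Am_ev0 m u (a : nat) : (a < m)%N -> u o0 = a%:R * u o2 -> (Am m).@[u] = 0.
Proof.
move=> am E; rewrite Am_ev (bigD1 (Ordinal am)) //= E subrr mul0r //.
Qed.

Lemma X_neq0 (i : 'I_3) : ('X_i : {mpoly k[3]}) != 0.
Proof.
apply/negP => /eqP E; have := mevalXU (fun _ => (1 : k)) i.
by rewrite E meval0 => /eqP; rewrite eq_sym oner_eq0.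
Qed.

Lemma Gm (c : k) (m : nat) (g : {mpoly k[3]}) :
  (forall j, (j < m)%N -> forall y l, l != 0 -> y != c * l ->
     g.@[vec3 (l * j%:R) y l] = 0) ->
  exists b, g = Am m * b.
Proof.
elim: m g => [|m IH] g H; first by exists g; rewrite /Am big_ord0 mul1r.
have [h Eh] : exists h, g = Am m * h.
  by apply: IH => j jm; apply: H; apply: ltnW.
have Hh : forall y l, l != 0 -> y != c * l -> h.@[vec3 (l * m%:R) y l] = 0.
  move=> y l l0 yc; have := H m (ltnSn m) y l l0 yc.
  rewrite Eh mevalM => /eqP; rewrite mulf_eq0 => /orP [|/eqP//].
  rewrite Am_ev prodf_seq_eq0 => /hasP [j _ /=]; rewrite /vec3 /=.
  rewrite [_ * l]mulrC -mulrBr mulf_eq0 (negbTE l0) /= -natrB; last by apply: ltnW.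
  by rewrite ((pcharf0P k).1 ch) subn_eq0 leqNgt ltn_ord.
have [q [h0 [E0 H0]]] := divlin (m%:R) h (isT : o0 != o2).
have h00 : h0 = 0.
  have : 'X_o2 * Lc c * h0 = 0.
    apply: mpoly3_eq0 => u; rewrite !mevalM mevalXU Lc_ev.
    case: (eqVneq (u o2) 0) => [->|u2]; first by rewrite !mul0r.
    case: (eqVneq (u o1) (c * u o2)) => [->|u1]; first by rewrite subrr mulr0 mul0r.
    rewrite H0 (meval_eq _ (eq3 (u' := vec3 (u o2 * m%:R) (u o1) (u o2)) _ _ _)) //.
    - by rewrite Hh // mulr0.
    - by rewrite /subst_ev /= mulrC.
  move/eqP; rewrite !mulf_eq0 (negbTE (X_neq0 _)) /= => /orP [/eqP Lc0|/eqP //].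
  have := Lc_ev c (vec3 0 1 0); rewrite Lc0 meval0 /vec3 /= mulr0 subr0 => /eqP.
  by rewrite eq_sym oner_eq0.
exists q; rewrite Eh E0 h00 addr0 /Am big_ord_recr /= mulrA //.
Qed.

Lemma point_ev (a b c : k) (i : 'I_3) : (point a b c) 0 i = vec3 a b c i.
Proof. by rewrite /point mxE. Qed.

Definition krow (c : k) (m : nat) : seq 'rV[k]_3 := [seq point j%:R c 1 | j <- iota 0 m].

Definition row_ok (Y : seq 'rV[k]_3) (c : k) (m : nat) :=
  forall P, P \in Y -> P 0 o2 = 1 /\ P 0 o1 != c /\ exists2 a, (a < m)%N & P 0 o0 = a%:R.

Lemma Am_vanish Y c m : row_ok Y c m -> vanishing_ideal Y (Am m).
Proof.
move=> HY; apply/vanishP => P PY l l0.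
have [P2 [_ [a am P0]]] := HY P PY.
by apply: (Am_ev0 am); rewrite P0 P2 mulr1 mulrC.
Qed.

Lemma bdl_key Y c m : row_ok Y c m ->
  forall f, (exists a b, vanishing_ideal Y a /\ f = Lc c * a + Am m * b) <->
            vanishing_ideal (Y ++ krow c m) f.
Proof.
move=> HY f; split.
  move=> [a [b [Ha ->]]]; apply/vanishP => P; rewrite mem_cat => /orP [PY|Prow] l l0;
    rewrite mevalD !mevalM.
    have [P2 [_ [a' am P0]]] := HY P PY.
    rewrite ((vanishP _ _).1 Ha P PY l l0) mulr0 add0r.
    by rewrite (Am_ev0 am) ?mul0r // P0 P2 mulr1 mulrC.
  move: Prow => /mapP [j]; rewrite mem_iota add0n => /andP [_ jm] ->.
  rewrite Lc_ev (Am_ev0 jm) ?mul0r ?addr0; last by rewrite !point_ev /vec3 /= mulr1 mulrC.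
  by rewrite !point_ev /vec3 /= mulr1 [c * _]mulrC subrr mul0r.
move=> H.
have [q [g [Ef Hg]]] := divlin c f (isT : o1 != o2).
have [b Eb] : exists b, g = Am m * b.
  apply: (Gm (c := c)) => j jm y l l0 _.
  rewrite Hg -((vanishP _ _).1 H (point j%:R c 1) _ l l0); last first.
    by rewrite mem_cat; apply/orP; right; apply/mapP; exists j; rewrite // mem_iota.
  apply: meval_eq; apply: eq3; rewrite /subst_ev /= !point_ev /vec3 /= ?mulr1 //.
  by rewrite mulrC.
exists q, b; split; last by rewrite Ef Eb.
apply/vanishP => P PY l l0.
have := (vanishP _ _).1 H P _ l l0; rewrite mem_cat PY => /(_ isT).
rewrite Ef Eb mevalD !mevalM.
have [P2 [P1 [a' am P0]]] := HY P PY.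
rewrite (Am_ev0 am) ?mul0r ?addr0; last by rewrite P0 P2 mulr1 mulrC.
rewrite Lc_ev /= P2 mulr1 [c * l]mulrC -mulrBr => /eqP; rewrite !mulf_eq0 (negbTE l0) /=.
by rewrite subr_eq0 (negbTE P1) /= => /eqP.
Qed.

Lemma homog_ofE d (f : {mpoly k[3]}) : homog_of_deg d f = (f \is @ishomog1 3 k d mdeg).
Proof. by rewrite dhomogE. Qed.

Lemma X_homog (i : 'I_3) : ('X_i : {mpoly k[3]}) \is @ishomog1 3 k 1 mdeg.
Proof. by rewrite dhomogX; apply/eqP; apply: mdeg1. Qed.

Lemma Lc_homog c : homog_of_deg 1 (Lc c).
Proof. by rewrite homog_ofE /Lc rpredB ?rpredZ ?X_homog. Qed.

Lemma Am_homog m : homog_of_deg m (Am m).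
Proof.
rewrite homog_ofE /Am; elim: m => [|m IH].
  by rewrite big_ord0; apply: dhomog1.
rewrite big_ord_recr /=.
have H1 : ('X_o0 - m%:R *: 'X_o2 : {mpoly k[3]}) \is @ishomog1 3 k 1 mdeg.
  by rewrite rpredB ?rpredZ ?X_homog.
by have := dhomogM IH H1; rewrite addn1.
Qed.

Lemma reg_AL c m : (0 < m)%N -> regular_seq2 (Am m) (Lc c).
Proof.
move=> m0; split; [|split].
- apply/negP => /eqP E; have := Am_ev m (vec3 1 0 0).
  rewrite E meval0 big1 => [/eqP|j _]; first by rewrite eq_sym oner_eq0.
  by rewrite /vec3 /= mulr0 subr0.
- move=> h [c' E]; apply: (Gm (c := c)) => j jm y l l0 yc.
  have := congr1 (meval (vec3 (l * j%:R) y l)) E.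
  rewrite !mevalM (Am_ev0 jm) ?mul0r; last by rewrite /vec3 /= mulrC.
  move/eqP; rewrite mulf_eq0 Lc_ev /vec3 /= subr_eq0 (negbTE yc) /=.
  by move/eqP.
- move=> [a [b E]]; have := congr1 (meval (vec3 0 c 1)) E.
  rewrite mevalD !mevalM meval1 (Am_ev0 (a := 0%N) m0) ?mul0r //.
  by rewrite Lc_ev /vec3 /= mulr1 subrr mul0r addr0 => /eqP; rewrite oner_eq0.
Qed.

Lemma ptv_mono (T : seq nat) : pseudo_type_vector T ->
  forall i j, (i <= j)%N -> (j < size T)%N -> (nth 0%N T i <= nth 0%N T j)%N.
Proof.
move=> [_ [_ [H _]]] i j ij; elim: j ij => [|j IH]; first by rewrite leqn0 => /eqP ->.
rewrite leq_eqVlt => /orP [/eqP -> //|ij] jT.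
apply: leq_trans (IH ij (ltnW jT)) (H _ jT).
Qed.

Definition preT (T : seq nat) (i : nat) : seq 'rV[k]_3 :=
  flatten [seq krow ((size T - i'.+1)%:R) (nth 0%N T i') | i' <- iota 0 i].

Lemma preT_full T : preT T (size T) = std_config k T.
Proof. by []. Qed.

Lemma preTS T i : preT T i.+1 = preT T i ++ krow ((size T - i.+1)%:R) (nth 0%N T i).
Proof.
have E : iota 0 i.+1 = iota 0 i ++ [:: i] by rewrite -addn1 iotaD.
by rewrite /preT E map_cat flatten_cat /= cats0.
Qed.

Lemma preT_ok T i : pseudo_type_vector T -> (i < size T)%N ->
  row_ok (preT T i) ((size T - i.+1)%:R) (nth 0%N T i).
Proof.
move=> HT iT P /flattenP [r /mapP [i' Hi' ->]] /mapP [j Hj ->].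
move: Hi' Hj; rewrite !mem_iota !add0n => /andP [_ i'i] /andP [_ jm].
rewrite !point_ev /vec3 /=; split => //; split.
  rewrite natr_inj; apply/eqP; lia.
exists j => //; apply: leq_trans jm _; apply: ptv_mono => //; lia.
Qed.

Lemma part_i T : pseudo_type_vector T ->
  forall i, (i <= size T)%N ->
  exists I : {mpoly k[3]} -> Prop, bdl_obtainable I /\
    forall f, I f <-> vanishing_ideal (preT T i) f.
Proof.
move=> HT; elim=> [|i IH] iT.
  exists (fun _ => True); split; first exact: bdl_empty.
  by move=> f; split => // _ d P.
have [I [HI IE]] := IH (ltnW iT).
set c : k := (size T - i.+1)%:R; set m := nth 0%N T i.
have Hok := preT_ok HT iT.
have m0 : (0 < m)%N by have [_ [H _]] := HT; apply: H.
exists (bdl_ideal I (Am m) (Lc c)); split.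
  apply: (bdl_step (dF := m) (dG := 1)) => //.
  - by apply/(IE (Am m)); apply: Am_vanish Hok.
  - exact: Am_homog.
  - exact: Lc_homog.
  - exact: reg_AL.
move=> f; rewrite preTS -bdl_key //; split.
  by move=> [a [b [Ia ->]]]; exists a, b; split => //; apply IE.
by move=> [a [b [Ia ->]]]; exists a, b; split => //; apply IE.
Qed.
End S.
Section R.
Variable k : fieldType.
Hypothesis ch : [pchar k] =i pred0.

Definition ff (x : k) (a : nat) : k := \prod_(l < a) (x - l%:R).

Lemma ffS x a : ff x a.+1 = ff x a * (x - a%:R).
Proof. by rewrite /ff big_ord_recr. Qed.

Lemma ff_nat_eq0 (u a : nat) : (ff u%:R a == 0) = (u < a)%N.
Proof.
apply/prodf_eq0/idP => [[l _]|ua]; last by exists (Ordinal ua) => //; rewrite subrr.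
by rewrite subr_eq0 (natr_inj ch) => /eqP ->.
Qed.

Lemma pow_ff a : exists c : nat -> k, (forall i, (a < i)%N -> c i = 0) /\
  forall x, x ^+ a = \sum_(i < a.+1) c i * ff x i.
Proof.
elim: a => [|a [c [c0 Hc]]].
  exists (fun i => (i == 0%N)%:R); split; first by case.
  by move=> x; rewrite big_ord1 /ff big_ord0 expr0 mulr1.
exists (fun i => (if i is i'.+1 then c i' else 0) + i%:R * c i); split.
  by move=> [|i] // ai; rewrite c0 ?c0 ?mulr0 ?addr0 //; apply: ltnW.
move=> x.
have E1 : \sum_(i < a.+2) (if nat_of_ord i is i'.+1 then c i' else 0) * ff x i =
          \sum_(i < a.+1) c i * ff x i.+1.
  by rewrite big_ord_recl /= mul0r add0r.
have E2 : \sum_(i < a.+2) i%:R * c i * ff x i = \sum_(i < a.+1) i%:R * c i * ff x i.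
  by rewrite big_ord_recr /= c0 // mulr0 mul0r addr0.
under [RHS]eq_bigr do rewrite mulrDl.
rewrite big_split /= E1 E2 -big_split /= exprS Hc big_distrr /=.
apply: eq_bigr => i _; rewrite ffS; ring.
Qed.

Lemma ff_pow a : exists c : nat -> k, (forall i, (a < i)%N -> c i = 0) /\
  forall x, ff x a = \sum_(i < a.+1) c i * x ^+ i.
Proof.
elim: a => [|a [c [c0 Hc]]].
  exists (fun i => (i == 0%N)%:R); split; first by case.
  by move=> x; rewrite big_ord1 /ff big_ord0 expr0 mulr1.
exists (fun i => (if i is i'.+1 then c i' else 0) - a%:R * c i); split.
  by move=> [|i] // ai; rewrite c0 ?c0 ?mulr0 ?subr0 //; apply: ltnW.
move=> x.
have E1 : \sum_(i < a.+2) (if nat_of_ord i is i'.+1 then c i' else 0) * x ^+ i =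
          \sum_(i < a.+1) c i * x ^+ i.+1.
  by rewrite big_ord_recl /= mul0r add0r.
have E2 : \sum_(i < a.+2) a%:R * c i * x ^+ i = \sum_(i < a.+1) a%:R * c i * x ^+ i.
  by rewrite big_ord_recr /= c0 // mulr0 mul0r addr0.
under [RHS]eq_bigr do rewrite mulrBl.
rewrite sumrB /= E1 E2 -sumrB /= ffS Hc big_distrl /=.
apply: eq_bigr => i _; rewrite exprS; ring.
Qed.

Definition ptC (ab : nat * nat) : 'rV[k]_3 := point ab.1%:R ab.2%:R 1.

Definition Mt (X : seq 'rV[k]_3) (t : nat) :=
  \matrix_(m < #|{: monoms t}|, j < size X)
           ev (nth 0 X j) 'X_[val (val (enum_val m))] : 'M[k]_(_, _).

Lemma hilbE X t : hilb X t = \rank (Mt X t).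
Proof. by []. Qed.

Lemma ev_ptC ab (mm : 'X_{1..3}) : ev (ptC ab) 'X_[mm] = ab.1%:R ^+ mm o0 * ab.2%:R ^+ mm o1.
Proof.
by rewrite /ev mevalX big3 /= !point_ev /vec3 /= expr1n !mulr1.
Qed.

Definition wrow (C : seq (nat * nat)) (i i' : nat) : 'rV[k]_(size (map ptC C)) :=
  \row_(j < size (map ptC C)) ((nth (0,0)%N C j).1%:R ^+ i * (nth (0,0)%N C j).2%:R ^+ i').

Definition mon_of (t i i' : nat) : 'X_{1..3} :=
  [multinom (nth 0%N [:: i; i'; (t - i - i')%N] l) | l < 3].

Lemma mdeg_mon_of t i i' : (i + i' <= t)%N -> mdeg (mon_of t i i') = t.
Proof. by move=> H; rewrite mdegE big3 /mon_of !mnmE /=; lia. Qed.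

Lemma wrow_sub C t i i' : (i + i' <= t)%N ->
  (wrow C i i' <= Mt (map ptC C) t)%MS.
Proof.
move=> H.
have H1 : (mdeg (mon_of t i i') < t.+1)%N by rewrite mdeg_mon_of.
pose bm : 'X_{1..3 < t.+1} := BMultinom H1.
have H2 : mdeg bm == t by rewrite /= mdeg_mon_of.
pose sm : monoms t := exist _ bm H2.
have Esz : size (map ptC C) = size C by rewrite size_map.
apply/(@eq_row_sub _ _ _ _ _ (enum_rank sm)); apply/rowP => j.
rewrite !mxE enum_rankK /= (nth_map (0,0)%N); last by rewrite -Esz.
by rewrite ev_ptC /mon_of !mnmE.
Qed.

Definition frow (C : seq (nat * nat)) (i i' : nat) : 'rV[k]_(size (map ptC C)) :=
  \row_(j < size (map ptC C)) (ff (nth (0,0)%N C j).1%:R i * ff (nth (0,0)%N C j).2%:R i').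

Lemma frow_wrow C i i' : exists c : nat -> nat -> k,
  frow C i i' = \sum_(l < i.+1) \sum_(l' < i'.+1) c l l' *: wrow C l l'.
Proof.
have [s [_ Hs]] := ff_pow i; have [s' [_ Hs']] := ff_pow i'.
exists (fun l l' => s l * s' l'); apply/rowP => j.
rewrite !mxE Hs Hs' big_distrlr summxE; apply: eq_bigr => l _.
rewrite summxE; apply: eq_bigr => l' _.
by rewrite !mxE /= mulrACA.
Qed.

Lemma wrow_frow C i i' : exists c : nat -> nat -> k,
  wrow C i i' = \sum_(l < i.+1) \sum_(l' < i'.+1) c l l' *: frow C l l'.
Proof.
have [s [_ Hs]] := pow_ff i; have [s' [_ Hs']] := pow_ff i'.
exists (fun l l' => s l * s' l'); apply/rowP => j.
rewrite !mxE Hs Hs' big_distrlr summxE; apply: eq_bigr => l _.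
rewrite summxE; apply: eq_bigr => l' _.
by rewrite !mxE /= mulrACA.
Qed.

Lemma frow_sub_Mt C t i i' : (i + i' <= t)%N -> (frow C i i' <= Mt (map ptC C) t)%MS.
Proof.
move=> H; have [c ->] := frow_wrow C i i'.
apply: summx_sub => l _; apply: summx_sub => l' _; apply: scalemx_sub.
apply: wrow_sub; have := ltn_ord l; have := ltn_ord l'; lia.
Qed.

Definition St (C : seq (nat * nat)) t := [seq ab <- C | (ab.1 + ab.2 <= t)%N].

Definition Gam C t : 'M[k]_(size (St C t), size (map ptC C)) :=
  \matrix_(r, j) (ff (nth (0,0)%N C j).1%:R (nth (0,0)%N (St C t) r).1 *
                  ff (nth (0,0)%N C j).2%:R (nth (0,0)%N (St C t) r).2).

Definition lowC (C : seq (nat * nat)) := forall a b a' b', (a, b) \in C ->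
  (a' <= a)%N -> (b' <= b)%N -> (a', b') \in C.

Lemma Gam_sub_Mt C t : (Gam C t <= Mt (map ptC C) t)%MS.
Proof.
apply/row_subP => r.
have Hr : ((nth (0,0)%N (St C t) r).1 + (nth (0,0)%N (St C t) r).2 <= t)%N.
  have := mem_nth (0,0)%N (ltn_ord r); rewrite mem_filter => /andP [] //.
have -> : row r (Gam C t) = frow C (nth (0,0)%N (St C t) r).1 (nth (0,0)%N (St C t) r).2.
  by apply/rowP => j; rewrite !mxE.
exact: frow_sub_Mt.
Qed.

Lemma frow_sub_Gam C t i i' : lowC C -> (i + i' <= t)%N -> (frow C i i' <= Gam C t)%MS.
Proof.
move=> HC H; case: (boolP ((i, i') \in C)) => iC.
  have iS : (i, i') \in St C t by rewrite mem_filter H.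
  have iS' : (index (i,i') (St C t) < size (St C t))%N by rewrite index_mem.
  apply: (eq_row_sub (Ordinal iS')).
  by apply/rowP => j; rewrite !mxE /= nth_index.
have -> : frow C i i' = 0; last by apply: sub0mx.
apply/rowP => j; rewrite !mxE.
have jC : (j < size C)%N by rewrite -(size_map ptC).
case E : (nth (0,0)%N C j) => [u v] /=.
have uvC : (u, v) \in C by rewrite -E mem_nth.
case: (leqP i u) => iu; case: (leqP i' v) => iv.
- by move: iC; rewrite (HC _ _ _ _ uvC iu iv).
- by apply/eqP; rewrite mulf_eq0 (ff_nat_eq0 v i') iv orbT.
- by apply/eqP; rewrite mulf_eq0 (ff_nat_eq0 u i) iu.
- by apply/eqP; rewrite mulf_eq0 (ff_nat_eq0 u i) iu.
Qed.

Lemma Mt_sub_Gam C t : lowC C -> (Mt (map ptC C) t <= Gam C t)%MS.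
Proof.
move=> HC; apply/row_subP => m.
set mm := val (val (enum_val m)).
have Hmm : (mm o0 + mm o1 <= t)%N.
  have := valP (enum_val m); rewrite -/mm => /eqP <-; rewrite mdegE big3; lia.
have -> : row m (Mt (map ptC C) t) = wrow C (mm o0) (mm o1).
  apply/rowP => j; rewrite !mxE (nth_map (0,0)%N); last by rewrite -(size_map ptC).
  by rewrite ev_ptC.
have [c ->] := wrow_frow C (mm o0) (mm o1).
apply: summx_sub => l _; apply: summx_sub => l' _; apply: scalemx_sub.
apply: frow_sub_Gam => //; have := ltn_ord l; have := ltn_ord l'; lia.
Qed.

Lemma Gam_inj C t (u : 'rV[k]_(size (St C t))) : uniq C ->
  u *m Gam C t = 0 -> u = 0.
Proof.
move=> uC uG; apply/rowP => r0; rewrite mxE; apply/eqP/negP => /negP nz.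
pose deg (r : 'I_(size (St C t))) := ((nth (0,0)%N (St C t) r).1 + (nth (0,0)%N (St C t) r).2)%N.
case: (@arg_minnP _ r0 (fun r => u 0 r != 0) deg nz) => r ur rmin.
case E : (nth (0,0)%N (St C t) r) => [a b].
have abC : (a, b) \in C.
  by have := mem_nth (0,0)%N (ltn_ord r); rewrite E mem_filter => /andP [].
have jlt : (index (a, b) C < size (map ptC C))%N by rewrite size_map index_mem.
have := congr1 (fun M : 'rV[k]_(size (map ptC C)) => M 0 (Ordinal jlt)) uG; rewrite !mxE.
rewrite (bigD1 r) //= big1 ?addr0.
  rewrite !mxE /= nth_index // E /= => /eqP; rewrite !mulf_eq0 (negbTE ur) /=.
  by have H1 := ff_nat_eq0 a a; have H2 := ff_nat_eq0 b b; rewrite ltnn in H1; rewrite ltnn in H2; rewrite H1 H2.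
move=> r' r'r; rewrite !mxE /= nth_index //.
case: (eqVneq (u 0 r') 0) => [->|ur']; first by rewrite mul0r.
have := rmin r' ur'; rewrite /deg E /=.
case E' : (nth (0,0)%N (St C t) r') => [a' b'] /= le.
case: (leqP a' a) => aa.
  2: by have H := ff_nat_eq0 a a'; rewrite aa in H; rewrite (eqP H) mul0r mulr0.
case: (leqP b' b) => bb.
  2: by have H := ff_nat_eq0 b b'; rewrite bb in H; rewrite (eqP H) mulr0 mulr0.
have [ea eb] : a' = a /\ b' = b by lia.
have : nth (0,0)%N (St C t) r' == nth (0,0)%N (St C t) r by rewrite E E' ea eb.
rewrite nth_uniq ?filter_uniq // => /eqP/val_inj E2.
by move: r'r; rewrite E2 eqxx.
Qed.

Lemma Gam_rank C t : uniq C -> \rank (Gam C t) = size (St C t).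
Proof.
move=> uC; apply/eqP; rewrite -/(row_free _) -kermx_eq0.
apply/eqP/row_matrixP => r; rewrite row0; apply: (Gam_inj uC).
by apply/sub_kermxP; apply: row_sub.
Qed.

Lemma hilbC C t : uniq C -> lowC C ->
  hilb (map ptC C) t = count (fun ab => (ab.1 + ab.2 <= t)%N) C.
Proof.
move=> uC lC; rewrite hilbE -size_filter -/(St C t) -(Gam_rank t uC).
by apply/eqP; rewrite eqn_leq !mxrankS // ?Gam_sub_Mt ?Mt_sub_Gam.
Qed.
End R.
Definition rowC (T : seq nat) (i : nat) : seq (nat * nat) :=
  [seq (j, size T - i.+1)%N | j <- iota 0 (nth 0%N T i)].
Definition Cpre (T : seq nat) (n : nat) := flatten [seq rowC T i | i <- iota 0 n].

Lemma memCpre T n a b : reflect (exists i, [/\ (i < n)%N, b = (size T - i.+1)%N & (a < nth 0%N T i)%N])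
  ((a, b) \in Cpre T n).
Proof.
apply: (iffP flattenP) => [[r /mapP [i Hi ->]] /mapP [j Hj [-> ->]]|[i [Hi -> Ha]]].
  by exists i; move: Hi Hj; rewrite !mem_iota !add0n => /andP [_ ?] /andP [_ ?].
exists (rowC T i); first by apply/mapP; exists i; rewrite // mem_iota.
by apply/mapP; exists a; rewrite // mem_iota.
Qed.

Lemma CpreS T n : Cpre T n.+1 = Cpre T n ++ rowC T n.
Proof.
have E : iota 0 n.+1 = iota 0 n ++ [:: n] by rewrite -addn1 iotaD.
by rewrite /Cpre E map_cat flatten_cat /= cats0.
Qed.

Lemma Cpre_uniq T n : (n <= size T)%N -> uniq (Cpre T n).
Proof.
elim: n => [|n IH] nT; first by [].
rewrite CpreS cat_uniq IH ?(ltnW nT) //=; apply/andP; split.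
  apply/hasPn => -[a b] /mapP [j _ [-> ->]].
  apply/memCpre => -[i [ni E _]]; lia.
by rewrite map_inj_uniq ?iota_uniq // => x y [].
Qed.

Lemma Cpre_low T : pseudo_type_vector T -> lowC (Cpre T (size T)).
Proof.
move=> HT a b a' b' /memCpre [i [ip bE ai]] aa bb.
apply/memCpre; exists (size T - b'.+1)%N; split; [lia|lia|].
apply: (leq_trans (n := a.+1)); first by [].
apply: leq_trans ai _; apply: ptv_mono => //; lia.
Qed.

Lemma std_configE k T : std_config k T = map (@ptC k) (Cpre T (size T)).
Proof.
rewrite /std_config /Cpre map_flatten -map_comp; congr flatten; apply: eq_map => i /=.
by rewrite /rowC -map_comp.
Qed.

Lemma count_leS (s : seq (nat * nat)) t :
  count (fun ab => (ab.1 + ab.2 <= t.+1)%N) s =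
  (count (fun ab => (ab.1 + ab.2 <= t)%N) s + count (fun ab => ab.1 + ab.2 == t.+1)%N s)%N.
Proof.
elim: s => [|[a b] s IH] //=; rewrite IH.
case: (eqVneq (a + b)%N t.+1) => [->|ne] /=.
  rewrite leqnn ltnn /=; lia.
by rewrite leq_eqVlt (negbTE ne) ltnS /=; lia.
Qed.

Lemma count_le0 (s : seq (nat * nat)) :
  count (fun ab => (ab.1 + ab.2 <= 0)%N) s = count (fun ab => ab.1 + ab.2 == 0)%N s.
Proof. by apply: eq_count => ab; rewrite leqn0. Qed.

Lemma count_iota_eq c m t : count (fun j => j + c == t)%N (iota 0 m) = ((c <= t) && (t < c + m))%N.
Proof.
elim: m => [|m IH]; first by rewrite /= addn0; case: leqP => //; lia.
have E : iota 0 m.+1 = iota 0 m ++ [:: m] by rewrite -addn1 iotaD.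
rewrite E count_cat IH /=.
case: (leqP c t) => ct /=; last by case: eqP => //; lia.
case: (eqVneq (m + c)%N t) => e /=.
  have -> : (t < c + m)%N = false by lia.
  have -> : (t < c + m.+1)%N = true by lia.
  by [].
have -> : (t < c + m.+1)%N = (t < c + m)%N by lia.
by rewrite !addn0.
Qed.

Definition rr (T : seq nat) (t i : nat) : nat :=
  ((size T - i.+1 <= t) && (t < size T - i.+1 + nth 0%N T i))%N.

Lemma count_Cpre T t n :
  count (fun ab => ab.1 + ab.2 == t)%N (Cpre T n) = (\sum_(i < n) rr T t i)%N.
Proof.
elim: n => [|n IH]; first by rewrite big_ord0.
rewrite CpreS count_cat IH big_ord_recr /=; congr (_ + _)%N.
by rewrite /rowC count_map /= count_iota_eq.
Qed.

Lemma dhilbE (k : fieldType) (ch : [pchar k] =i pred0) T t : pseudo_type_vector T ->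
  dhilb (std_config k T) t = (\sum_(i < size T) rr T t i)%N%:Z.
Proof.
move=> HT; rewrite -count_Cpre std_configE.
have uC := Cpre_uniq (leqnn (size T)); have lC := Cpre_low HT.
case: t => [|t]; rewrite /dhilb !(hilbC ch) ?count_le0 // count_leS.
by rewrite PoszD addrAC subrr add0r.
Qed.
Ltac bcase := repeat match goal with |- context [if ?b then _ else _] => let H := fresh "H" in case: (boolP b) => H end.

Definition eT (T : seq nat) (i : nat) : bool := ((i.+1 < size T) && (nth 0%N T i.+1 == nth 0%N T i))%N.

Lemma term_eq T t i : pseudo_type_vector T -> (i < size T)%N ->
  (if (size T - i.+1 <= t)%N then s_seq T i (t - (size T - i.+1)) else 0%N) =
  ((if eT T i then 0 else rr T t i) + (if i is j.+1 then (if eT T j then rr T t j else 0) else 0))%N.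
Proof.
move=> [_ [Hpos [Hmono Hps]]] ip.
have mi := Hpos i ip.
rewrite /s_seq /eT /rr; case: i ip mi => [|j] ip mi.
  rewrite /nat_of_bool; bcase => //; lia.
have mono := Hmono j ip.
have ps : (j.+2 < size T)%N -> nth 0%N T j = nth 0%N T j.+1 -> (nth 0%N T j.+1 < nth 0%N T j.+2)%N := Hps j.
rewrite /nat_of_bool; bcase => //; try lia.
Qed.

Lemma std_O_seqE T t : pseudo_type_vector T ->
  std_O_seq T t = (\sum_(i < size T) rr T t i)%N.
Proof.
move=> HT; rewrite /std_O_seq.
under eq_bigr => i _ do rewrite (term_eq t HT (ltn_ord i)).
rewrite big_split /=.
have EB : (\sum_(i < size T) (if nat_of_ord i is j.+1 then (if eT T j then rr T t j else 0) else 0))%N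
        = (\sum_(i < size T) (if eT T i then rr T t i else 0))%N.
  case ET: (size T) => [|p]; first by rewrite !big_ord0.
  rewrite big_ord_recl big_ord_recr /= add0n.
  have -> : eT T p = false by rewrite /eT ET ltnn.
  by rewrite addn0; apply: eq_bigr => i _; rewrite add0n.
rewrite EB -big_split /=; apply: eq_bigr => i _.
by case: (eT T i); rewrite ?add0n ?addn0.
Qed.
Definition ee (T : seq nat) (i : nat) : nat := (size T - i.+1 + nth 0%N T i)%N.

Lemma reg_of (k : fieldType) (ch : [pchar k] =i pred0) T r : pseudo_type_vector T ->
  (forall i, (i < size T)%N -> (ee T i <= r)%N) ->
  (exists i, (i < size T)%N /\ ee T i = r) ->
  is_regularity (std_config k T) r.
Proof.
move=> HT Hle [i0 [i0p Hi0]]; split.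
  rewrite (dhilbE ch _ HT) big1 // => i _; rewrite /rr.
  by have := Hle i (ltn_ord i); rewrite /ee => H; apply/eqP; rewrite eqb0 negb_and -leqNgt H orbT.
move=> t tr; rewrite (dhilbE ch _ HT) => /eqP; rewrite eqz_nat => /eqP /esym E.
have [i' [ip' ri']] : exists i', (i' < size T)%N /\ rr T t i' = 1%N.
  have [_ [Hpos _]] := HT.
  case: (leqP (size T - i0.+1) t) => H.
    exists i0; split => //; rewrite /rr H /=; move: Hi0 tr; rewrite /ee; case: ltnP => //; lia.
  exists (size T - t.+1)%N; split; first lia.
  have := Hpos (size T - t.+1)%N; rewrite /rr; case: leqP; case: ltnP => //; lia.
have := E; rewrite (bigD1 (Ordinal ip')) //= ri'; lia.
Qed.

Lemma ee_step T i : pseudo_type_vector T -> (i.+1 < size T)%N ->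
  (ee T i + deltaT T i.+1 = ee T i.+1 + 1)%N.
Proof.
move=> [_ [_ [Hm _]]] ip; have := Hm i ip; rewrite /ee /deltaT; lia.
Qed.

Lemma ee_ones T i c : pseudo_type_vector T -> (i <= c)%N -> (c < size T)%N ->
  (forall j, (i < j <= c)%N -> deltaT T j = 1%N) -> ee T i = ee T c.
Proof.
move=> HT; elim: c => [|c IH] ic cp H; first by have -> : i = 0%N by lia.
case: (eqVneq i c.+1) => [-> //|ne].
have := ee_step HT cp; rewrite H; last by lia.
rewrite IH //; try lia.
move=> j ?; apply: H; lia.
Qed.

Definition Asuf (T : seq nat) (i : nat) := exists a, (i < a < size T)%N /\ deltaT T a = 0%N /\
  forall c, (a < c < size T)%N -> deltaT T c = 1%N.

Definition Hsep (T : seq nat) := forall a b, (a < b < size T)%N -> deltaT T a = 0%N -> deltaT T b = 0%N ->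
         exists c, (a < c < b)%N /\ (1 < deltaT T c)%N.

Lemma ee_last T : (0 < size T)%N -> ee T (size T).-1 = nth 0%N T (size T).-1.
Proof. by move=> H; rewrite /ee prednK // subnn. Qed.

Lemma ee_bound T : pseudo_type_vector T -> Hsep T ->
  forall i, (i < size T)%N -> (ee T i <= nth 0%N T (size T).-1 + 1)%N /\
    (~ Asuf T i -> (ee T i <= nth 0%N T (size T).-1)%N).
Proof.
move=> HT Hs.
have p0 : (0 < size T)%N by case: HT.
set mp := nth 0%N T (size T).-1.
suff: forall n i, (size T <= i + n.+1)%N -> (i < size T)%N ->
   (ee T i <= mp + 1)%N /\ (~ Asuf T i -> (ee T i <= mp)%N).
  by move=> H i ip; apply: (H (size T)) => //; lia.
elim=> [|n IH] i ipn ip.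
  have -> : i = (size T).-1 by lia.
  by rewrite ee_last // -/mp; split => [|_]; lia.
case: (leqP (size T) (i + n.+1)) => ipn'; first exact: IH.
have i1p : (i.+1 < size T)%N by lia.
have IHc : forall c, (i < c)%N -> (c < size T)%N ->
   (ee T c <= mp + 1)%N /\ (~ Asuf T c -> (ee T c <= mp)%N).
  by move=> c ic cp; apply: IH => //; lia.
have st := ee_step HT i1p.
have AiA : forall c, (i < c)%N -> Asuf T c -> Asuf T i.
  by move=> c ic [a [ac [a0 a1]]]; exists a; split => //; lia.
case: (ltngtP (deltaT T i.+1) 1) => d.
-
  have d0 : deltaT T i.+1 = 0%N by lia.
  case: (boolP (has (fun c => deltaT T c != 1%N) (iota i.+2 (size T - i.+2)))) => Hh.
    have exP : exists c, (i.+1 < c < size T)%N && (deltaT T c != 1%N).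
      move: Hh => /hasP [c]; rewrite mem_iota => ? ?; exists c; apply/andP; split => //; lia.
    case: (ex_minnP exP) => c /andP [cb cd] cmin.
    have ones : forall j, (i.+1 < j <= c.-1)%N -> deltaT T j = 1%N.
      move=> j jb; apply/eqP; apply/negP => /negP nj.
      have := cmin j; rewrite nj andbT; lia.
    have E1 := ee_ones HT (_ : (i.+1 <= c.-1)%N) (_ : (c.-1 < size T)%N) ones.
    have dc : (2 <= deltaT T c)%N.
      case: (ltngtP (deltaT T c) 1) => // dc; last by move: cd; rewrite dc.
      have dc0 : deltaT T c = 0%N by lia.
      have [c' [c'b c'd]] := Hs i.+1 c cb d0 dc0.
      have := cmin c'; rewrite (_ : deltaT T c' != 1%N); last by apply/eqP; lia.
      rewrite andbT; lia.
    have st2 := ee_step HT (_ : (c.-1.+1 < size T)%N).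
    rewrite prednK in st2; last by lia.
    have := IHc c (_ : (i < c)%N) (_ : (c < size T)%N); case; try lia.
    move=> H1 H2; split; first by rewrite E1 in st; lia.
    move=> nA; have := H2 (fun A => nA (AiA c (_ : (i < c)%N) A)).
    by rewrite E1 in st; lia.
  have ones : forall j, (i.+1 < j <= (size T).-1)%N -> deltaT T j = 1%N.
    move=> j jb; apply/eqP; apply/negP => /negP nj; move/hasP: Hh; apply.
    by exists j => //; rewrite mem_iota; lia.
  have l1 : (i.+1 <= (size T).-1)%N by lia.
  have l2 : ((size T).-1 < size T)%N by lia.
  have E1 := ee_ones HT l1 l2 ones.
  rewrite E1 ee_last // in st.
  split; first lia.
  move=> nA; exfalso; apply: nA; exists i.+1; split; first lia; split => //.
  by move=> c cb; apply: ones; lia.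
-
  have [H1 _] := IHc i.+1 (ltnSn i) i1p; split; lia.
-
  have [H1 H2] := IHc i.+1 (ltnSn i) i1p; split; first lia.
  by move=> nA; have := H2 (fun A => nA (AiA i.+1 (ltnSn i) A)); lia.
Qed.
Lemma part_iii (k : fieldType) (ch : [pchar k] =i pred0) T : pseudo_type_vector T -> Hsep T ->
  ((exists a, (a < size T)%N /\ deltaT T a = 0%N /\
      forall c, (a < c < size T)%N -> deltaT T c = 1%N) ->
    is_regularity (std_config k T) (nth 0%N T (size T).-1).+1) /\
  (~ (exists a, (a < size T)%N /\ deltaT T a = 0%N /\
      forall c, (a < c < size T)%N -> deltaT T c = 1%N) ->
    is_regularity (std_config k T) (nth 0%N T (size T).-1)).
Proof.
move=> HT Hs; have p0 : (0 < size T)%N by case: HT.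
have [_ [Hpos _]] := HT.
split.
  move=> [a [ap [a0 a1]]]; apply: (reg_of ch HT).
    by move=> i ip; have [H _] := ee_bound HT Hs ip; rewrite -addn1.
  have a_pos : (0 < a)%N.
    case: a ap a0 {a1} => // ap; rewrite /deltaT => E; have := Hpos 0%N ap; lia.
  exists a.-1; split; first lia.
  have l0 : (a.-1.+1 < size T)%N by rewrite prednK.
  have st := ee_step HT l0.
  rewrite prednK // a0 in st.
  have l1 : (a <= (size T).-1)%N by lia.
  have l2 : ((size T).-1 < size T)%N by lia.
  have ones : forall j, (a < j <= (size T).-1)%N -> deltaT T j = 1%N.
    by move=> j jb; apply: a1; lia.
  have E1 := ee_ones HT l1 l2 ones.
  rewrite E1 ee_last // in st; lia.
move=> nA; apply: (reg_of ch HT).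
  move=> i ip; have [_ H] := ee_bound HT Hs ip; apply: H.
  by move=> [a [ab [a0 a1]]]; apply: nA; exists a; split => //; lia.
by exists (size T).-1; split; [lia| rewrite ee_last].
Qed.

Definition Tiv (N : nat) : seq nat := [seq (i %/ 2).+1 | i <- iota 0 (N.*2 + 4)]%N.

Lemma Tiv_nth N i : (i < N.*2 + 4)%N -> nth 0%N (Tiv N) i = (i %/ 2).+1.
Proof. by move=> H; rewrite /Tiv (nth_map 0%N) ?size_iota // nth_iota. Qed.

Lemma Tiv_size N : size (Tiv N) = (N.*2 + 4)%N.
Proof. by rewrite size_map size_iota. Qed.

Lemma Tiv_ptv N : pseudo_type_vector (Tiv N).
Proof.
rewrite /pseudo_type_vector Tiv_size; split; first lia.
split; first by move=> i ip; rewrite Tiv_nth.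
split; first by move=> i ip; rewrite !Tiv_nth //; lia.
by move=> i ip; rewrite !Tiv_nth //; lia.
Qed.

Lemma part_iv (k : fieldType) (ch : [pchar k] =i pred0) (N : nat) :
  exists T : seq nat, pseudo_type_vector T /\
     (exists a b, (a < b < size T)%N /\ deltaT T a = 0%N /\ deltaT T b = 0%N /\
        forall c, (a < c < b)%N -> (deltaT T c <= 1)%N) /\
     exists r, is_regularity (std_config k T) r /\
        (nth 0%N T (size T).-1 + N <= r)%N.
Proof.
exists (Tiv N); split; first exact: Tiv_ptv.
split.
  exists 1%N, 3%N; rewrite Tiv_size; split; first lia.
  rewrite /deltaT !Tiv_nth; try lia; split => //; split => //.
  move=> c cb; have -> : c = 2%N by lia.
  by rewrite !Tiv_nth //; lia.
exists (ee (Tiv N) 0); split.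
  apply: (reg_of ch (Tiv_ptv N)); last by exists 0%N; rewrite Tiv_size; split => //; lia.
  by move=> i; rewrite Tiv_size /ee Tiv_size => ip; rewrite !Tiv_nth //; lia.
by rewrite /ee Tiv_size !Tiv_nth; lia.
Qed.

Theorem proposition3p6 :
  forall (k : fieldType), [pchar k] =i pred0 ->
  (forall T : seq nat, pseudo_type_vector T ->
     let X := std_config k T in
     let p := size T in
     let mp := nth 0%N T p.-1 in
     (* (i) *)
     (exists I : {mpoly k[3]} -> Prop, bdl_obtainable I /\
        forall f, I f <-> vanishing_ideal X f) /\
     (* (ii) *)
     (forall t, dhilb X t = (std_O_seq T t)%:Z) /\
     (* (iii) *)
     ((forall a b, (a < b < p)%N -> deltaT T a = 0%N -> deltaT T b = 0%N ->
         exists c, (a < c < b)%N /\ (1 < deltaT T c)%N) ->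
      ((exists a, (a < p)%N /\ deltaT T a = 0%N /\
          forall c, (a < c < p)%N -> deltaT T c = 1%N) ->
         is_regularity X mp.+1) /\
      (~ (exists a, (a < p)%N /\ deltaT T a = 0%N /\
          forall c, (a < c < p)%N -> deltaT T c = 1%N) ->
         is_regularity X mp))) /\
  (* (iv) *)
  (forall N : nat, exists T : seq nat, pseudo_type_vector T /\
     (exists a b, (a < b < size T)%N /\ deltaT T a = 0%N /\ deltaT T b = 0%N /\
        forall c, (a < c < b)%N -> (deltaT T c <= 1)%N) /\
     exists r, is_regularity (std_config k T) r /\
        (nth 0%N T (size T).-1 + N <= r)%N).
Proof.
move=> k ch; split; last exact: part_iv ch.
move=> T HT X p mp; split; [|split].
- have [I [HI IE]] := @part_i k ch T HT (size T) (leqnn _).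
  by exists I; split.
- by move=> t; rewrite /X (dhilbE ch t HT) (std_O_seqE t HT).
- by move=> Hs; exact: (part_iii ch HT Hs).
Qed.
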